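(* Let $X$, $Y$ be disjoint sets of cardinality at least two, and let $M\le\mathrm{Sym}(X)$ and $N\le\mathrm{Sym}(Y)$ be nontrivial permutation groups. Then $M\boxtimes N$ is subdegree-finite if and only if $M$ is subdegree-finite and all orbits of $N$ are finite.
   Context: A permutation group is subdegree-finite if every orbit of every point stabiliser is finite. Let $T$ be the $(|X|,|Y|)$-biregular tree with natural bipartition $VT=V_X\sqcup V_Y$ (vertices in $V_X$ have valency $|X|$, in $V_Y$ valency $|Y|$). $A(v)$, $\overline{A}(v)$ are the sets of arcs with origin, resp. terminus, $v$. A legal colouring is a map $c:AT\to X\cup Y$ restricting to a bijection $A(v)\to X$ for $v\in V_X$, to a bijection $A(v)\to Y$ for $v\in V_Y$, and constant on each $\overline{A}(v)$. $U_c(M,N)$ is the group of $g\in\mathrm{Aut}(T)$ with $gV_X=V_X$ and $c|_{A(gv)}\circ g|_{A(v)}\circ(c|_{A(v)})^{-1}$ in $M$ for $v\in V_X$ and in $N$ for $v\in V_Y$. The box product $M\boxtimes N\le\mathrm{Sym}(V_Y)$ is the group induced on $V_Y$ by $U_c(M,N)$. *)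

(* Defs.v *)
From Stdlib Require Import List.
Import ListNotations.

Definition finite_set {T : Type} (P : T -> Prop) : Prop :=
  exists l : list T, forall t, P t -> In t l.

Definition perm_group {X : Type} (M : (X -> X) -> Prop) : Prop :=
  M (fun x => x) /\
  (forall m1 m2, M m1 -> M m2 -> M (fun x => m1 (m2 x))) /\
  (forall m, M m -> exists m', M m' /\ (forall x, m' (m x) = x) /\ (forall x, m (m' x) = x)).

Definition nontrivial_group {X : Type} (M : (X -> X) -> Prop) : Prop :=
  exists m, M m /\ exists x, m x <> x.

Definition subdegree_finite {X : Type} (M : (X -> X) -> Prop) : Prop :=
  forall x y : X, finite_set (fun z => exists m, M m /\ m x = x /\ m y = z).

Definition all_orbits_finite {X : Type} (M : (X -> X) -> Prop) : Prop :=
  forall x : X, finite_set (fun z => exists m, M m /\ m x = z).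

(** Walks and reduced (non-backtracking) walks in a graph. A walk from u is a
    list [w1; ...; wk] with u ~ w1 ~ ... ~ wk; it ends at [last l u]. *)
Fixpoint is_walk {V : Type} (adj : V -> V -> Prop) (u : V) (l : list V) : Prop :=
  match l with
  | [] => True
  | w :: l' => adj u w /\ is_walk adj w l'
  end.

Fixpoint no_backtrack {V : Type} (u : V) (l : list V) : Prop :=
  match l with
  | w :: l' =>
      match l' with
      | x :: _ => u <> x /\ no_backtrack w l'
      | [] => True
      end
  | [] => True
  end.

Definition reduced_path {V : Type} (adj : V -> V -> Prop) (u : V) (l : list V) (v : V) : Prop :=
  is_walk adj u l /\ no_backtrack u l /\ last l u = v.

Definition is_tree {V : Type} (adj : V -> V -> Prop) : Prop :=
  inhabited V /\
  (forall u v, adj u v -> adj v u) /\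
  (forall u, ~ adj u u) /\
  (forall u v, exists l, reduced_path adj u l v) /\
  (forall u v l1 l2, reduced_path adj u l1 v -> reduced_path adj u l2 v -> l1 = l2).

(** A tree with its natural bipartition V = V_X ⊔ V_Y (V_X = inX, V_Y = complement). *)
Definition bipartitioned_tree {V : Type} (adj : V -> V -> Prop) (inX : V -> Prop) : Prop :=
  is_tree adj /\ (forall u v, adj u v -> (inX u <-> ~ inX v)).

(** Legal colouring c : AT -> X ⊔ Y; the arc (v,w) (origin v, terminus w) has
    colour [c v w] (values of c on non-arcs are irrelevant).  The colouring
    being a bijection A(v) -> X (resp. Y) forces the (|X|,|Y|)-biregularity. *)
Definition legal_colouring {V X Y : Type} (adj : V -> V -> Prop) (inX : V -> Prop)
    (c : V -> V -> X + Y) : Prop :=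
  (forall v, inX v ->
     (forall w, adj v w -> exists x, c v w = inl x) /\
     (forall x, exists w, adj v w /\ c v w = inl x)) /\
  (forall v, ~ inX v ->
     (forall w, adj v w -> exists y, c v w = inr y) /\
     (forall y, exists w, adj v w /\ c v w = inr y)) /\
  (forall v w w', adj v w -> adj v w' -> c v w = c v w' -> w = w') /\
  (forall u u' v, adj u v -> adj u' v -> c u v = c u' v).

(** Membership in U_c(M,N): g is an automorphism of T with g V_X = V_X whose
    local actions c|_{A(gv)} ∘ g|_{A(v)} ∘ (c|_{A(v)})^{-1} lie in M (v ∈ V_X)
    resp. N (v ∈ V_Y). *)
Definition in_U {V X Y : Type} (adj : V -> V -> Prop) (inX : V -> Prop)
    (c : V -> V -> X + Y) (M : (X -> X) -> Prop) (N : (Y -> Y) -> Prop) (g : V -> V) : Prop :=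
  (exists h : V -> V, (forall v, h (g v) = v) /\ (forall v, g (h v) = v)) /\
  (forall u v, adj u v <-> adj (g u) (g v)) /\
  (forall v, inX (g v) <-> inX v) /\
  (forall v, inX v -> exists m, M m /\
     forall w x, adj v w -> c v w = inl x -> c (g v) (g w) = inl (m x)) /\
  (forall v, ~ inX v -> exists n, N n /\
     forall w y, adj v w -> c v w = inr y -> c (g v) (g w) = inr (n y)).

(** M ⊠ N is the permutation group induced on V_Y by U_c(M,N).  It is
    subdegree-finite iff for all α, β ∈ V_Y the orbit of β under the
    stabiliser of α is finite. *)
Definition box_product_subdegree_finite {V X Y : Type} (adj : V -> V -> Prop)
    (inX : V -> Prop) (c : V -> V -> X + Y) (M : (X -> X) -> Prop) (N : (Y -> Y) -> Prop) : Prop :=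
  forall a b : V, ~ inX a -> ~ inX b ->
    finite_set (fun z => exists g, in_U adj inX c M N g /\ g a = a /\ g b = z).

(* Main.v *)
Require Import Defs.
From Stdlib Require Import List Classical ClassicalEpsilon.
Import ListNotations.

Lemma finite_sub {T} (P Q : T -> Prop) : (forall z, P z -> Q z) -> finite_set Q -> finite_set P.
Proof. intros H [l Hl]. exists l. auto. Qed.

Lemma finite_le1 {T} (P : T -> Prop) : (forall a b, P a -> P b -> a = b) -> finite_set P.
Proof.
  intros H. destruct (classic (exists a, P a)) as [[a Ha]|Hn].
  - exists [a]. intros t Ht. left. symmetry. apply H; auto.
  - exists []. intros t Ht. exfalso. apply Hn. eauto.
Qed.

Lemma finite_bind {A B} (P : A -> Prop) (Q : A -> B -> Prop) :
  finite_set P -> (forall a, P a -> finite_set (Q a)) ->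
  finite_set (fun z => exists a, P a /\ Q a z).
Proof.
  intros [l Hl] HQ.
  assert (H : forall l', finite_set (fun z => exists a, In a l' /\ P a /\ Q a z)).
  { induction l' as [|a l' IH].
    - exists []. intros t (a & [] & _).
    - destruct IH as [k Hk].
      destruct (classic (P a)) as [Pa|nPa].
      + destruct (HQ a Pa) as [k' Hk']. exists (k' ++ k). intros t (a0 & [<-|Hin] & Pa0 & Qt).
        * apply in_or_app. left. auto.
        * apply in_or_app. right. apply Hk. eauto.
      + exists k. intros t (a0 & [<-|Hin] & Pa0 & Qt).
        * contradiction.
        * apply Hk. eauto. }
  destruct (H l) as [k Hk]. exists k. intros t (a & Pa & Qt). apply Hk. exists a. auto.
Qed.

Lemma last_cons_eq {T} (l : list T) : forall a d, last (a :: l) d = last l a.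
Proof.
  induction l as [|b l IH]; intros a d; [reflexivity|].
  change (last (b :: l) d = last (b :: l) a). rewrite !IH. reflexivity.
Qed.

Lemma nb_app {V} (w : V) (l : list V) : forall s, no_backtrack s l ->
  no_backtrack s (l ++ [w]) \/ exists l0, l = l0 ++ [last l s] /\ last l0 s = w.
Proof.
  induction l as [|z l1 IH]; intros s Hnb.
  - left. exact I.
  - destruct l1 as [|x l2].
    + destruct (classic (s = w)) as [E|E].
      * right. exists []. split; [reflexivity|exact E].
      * left. simpl. split; [exact E|exact I].
    + destruct Hnb as [Hsx Hnb].
      destruct (IH z Hnb) as [H|[l0 [E1 E2]]].
      * left. simpl. split; [exact Hsx|exact H].
      * right. exists (z :: l0). split.
        -- rewrite (last_cons_eq (x :: l2)). simpl. rewrite E1 at 1. reflexivity.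
        -- rewrite last_cons_eq. exact E2.
Qed.

Lemma walk_prefix {V} (adj : V -> V -> Prop) (u : V) (l0 : list V) : forall s,
  is_walk adj s (l0 ++ [u]) -> is_walk adj s l0.
Proof.
  induction l0 as [|z l IH]; intros s H; simpl in *; [exact I|].
  destruct H as [H1 H2]. split; auto.
Qed.

Lemma nb_prefix {V} (u : V) (l0 : list V) : forall s,
  no_backtrack s (l0 ++ [u]) -> no_backtrack s l0.
Proof.
  induction l0 as [|z l IH]; intros s H; [exact I|].
  destruct l as [|x l2]; [exact I|].
  destruct H as [H1 H2]. split; [exact H1|]. apply (IH z). exact H2.
Qed.

Lemma walk_app {V} (adj : V -> V -> Prop) (w : V) (l : list V) : forall s,
  is_walk adj s l -> adj (last l s) w -> is_walk adj s (l ++ [w]).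
Proof.
  induction l as [|z l IH]; intros s H1 H2; simpl in *.
  - split; [exact H2|exact I].
  - destruct H1 as [Ha Hb]. split; [exact Ha|]. apply IH; auto.
    rewrite <- last_cons_eq with (d := s). exact H2.
Qed.

Definition lift {X Y} (m : X -> X) (n : Y -> Y) (s : X + Y) : X + Y :=
  match s with inl x => inl (m x) | inr y => inr (n y) end.
Section Construct.
Context {V X Y : Type} (adj : V -> V -> Prop) (inX : V -> Prop) (c : V -> V -> X + Y).
Hypothesis hT : bipartitioned_tree adj inX.
Hypothesis hc : legal_colouring adj inX c.
Variable v0 : V.

Lemma adj_sym u v : adj u v -> adj v u.
Proof. destruct hT as [[_ [H _]] _]. auto. Qed.
Lemma bip u v : adj u v -> (inX u <-> ~ inX v).
Proof. destruct hT as [_ H]. auto. Qed.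
Lemma cinj v w w' : adj v w -> adj v w' -> c v w = c v w' -> w = w'.
Proof. destruct hc as (_ & _ & H & _). eauto. Qed.
Lemma cinto u u' v : adj u v -> adj u' v -> c u v = c u' v.
Proof. destruct hc as (_ & _ & _ & H). eauto. Qed.
Lemma tree_uniq u v l1 l2 : reduced_path adj u l1 v -> reduced_path adj u l2 v -> l1 = l2.
Proof. destruct hT as [(_ & _ & _ & _ & H) _]. eauto. Qed.
Lemma tree_ex u v : exists l, reduced_path adj u l v.
Proof. destruct hT as [(_ & _ & _ & H & _) _]. eauto. Qed.

Definition pick (w : V) (col : X + Y) : V :=
  epsilon (inhabits w) (fun z => adj w z /\ c w z = col).

Definition rpath (u : V) : list V :=
  epsilon (inhabits nil) (fun l => reduced_path adj v0 l u).

Fixpoint img (phi : X+Y -> X+Y) (w w' : V) (l : list V) : list V :=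
  match l with
  | [] => []
  | z :: l' => pick w' (phi (c w z)) :: img phi z (pick w' (phi (c w z))) l'
  end.

Definition G phi u := last (img phi v0 v0 (rpath u)) v0.

Definition good (phi : X+Y -> X+Y) w w' := (inX w <-> inX w') /\
  (forall a b, adj a w -> adj b w' -> c b w' = phi (c a w)).

Definition side_pres (phi : X+Y -> X+Y) := (forall x, exists x', phi (inl x) = inl x') /\
  (forall y, exists y', phi (inr y) = inr y').

Lemma step_good phi w w' z : side_pres phi -> good phi w w' -> adj w z ->
  adj w' (pick w' (phi (c w z))) /\ c w' (pick w' (phi (c w z))) = phi (c w z) /\
  good phi z (pick w' (phi (c w z))).
Proof.
  intros [sl sr] [g1 g2] Hwz.
  assert (Hex : exists z0, adj w' z0 /\ c w' z0 = phi (c w z)).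
  { destruct hc as (cX & cY & _).
    destruct (classic (inX w)) as [Iw|Iw].
    - destruct (proj1 (cX w Iw) z Hwz) as [x Hx]. rewrite Hx.
      destruct (sl x) as [x' Hx']. rewrite Hx'.
      apply (proj2 (cX w' (proj1 g1 Iw))).
    - destruct (proj1 (cY w Iw) z Hwz) as [y Hy]. rewrite Hy.
      destruct (sr y) as [y' Hy']. rewrite Hy'.
      apply (proj2 (cY w' (fun h => Iw (proj2 g1 h)))). }
  pose proof (epsilon_spec (inhabits w') _ Hex) as [H1 H2].
  fold (pick w' (phi (c w z))) in H1, H2.
  set (z' := pick w' (phi (c w z))) in *.
  split; [exact H1|]. split; [exact H2|]. split.
  - pose proof (bip _ _ Hwz). pose proof (bip _ _ H1). tauto.
  - intros a b Ha Hb. rewrite (cinto b w' z' Hb H1), H2, (cinto w a z Hwz Ha). reflexivity.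
Qed.

Lemma img_walk phi : side_pres phi -> (forall s t, phi s = phi t -> s = t) ->
  forall l w w', good phi w w' -> is_walk adj w l -> no_backtrack w l ->
  is_walk adj w' (img phi w w' l) /\ no_backtrack w' (img phi w w' l) /\
  good phi (last l w) (last (img phi w w' l) w').
Proof.
  intros sp pinj l. induction l as [|z l1 IH]; intros w w' Hg Hw Hnb.
  - simpl. auto.
  - destruct Hw as [Hwz Hw1].
    destruct (step_good phi w w' z sp Hg Hwz) as (A1 & A2 & A3).
    set (z' := pick w' (phi (c w z))) in *.
    assert (Hnb1 : no_backtrack z l1).
    { destruct l1; [exact I|]. exact (proj2 Hnb). }
    destruct (IH z z' A3 Hw1 Hnb1) as (B1 & B2 & B3).
    split; [|split].
    + simpl. fold z'. split; assumption.
    + destruct l1 as [|x l2]; [exact I|].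
      simpl. fold z'. split; [|exact B2].
      destruct (step_good phi z z' x sp A3 (proj1 Hw1)) as (C1 & C2 & C3).
      intros E. apply (proj1 Hnb).
      destruct Hg as [_ Hg2].
      assert (E2 : c z' w' = phi (c z w)) by (apply Hg2; [apply adj_sym; exact Hwz|apply adj_sym; exact A1]).
      rewrite E in E2. rewrite C2 in E2. apply pinj in E2.
      apply (cinj z); [apply adj_sym; exact Hwz|exact (proj1 Hw1)|symmetry; exact E2].
    + simpl img. fold z'. rewrite (last_cons_eq l1), (last_cons_eq (img phi z z' l1)). exact B3.
Qed.

Lemma img_inv phi psi : side_pres phi -> (forall s, psi (phi s) = s) ->
  forall l w w', good phi w w' -> is_walk adj w l -> img psi w' w (img phi w w' l) = l.
Proof.
  intros sp hinv l. induction l as [|z l1 IH]; intros w w' Hg Hw; [reflexivity|].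
  destruct Hw as [Hwz Hw1].
  destruct (step_good phi w w' z sp Hg Hwz) as (A1 & A2 & A3).
  set (z' := pick w' (phi (c w z))) in *.
  simpl. fold z'.
  assert (E : pick w (psi (c w' z')) = z).
  { rewrite A2, hinv. unfold pick.
    assert (Hex : exists z0, adj w z0 /\ c w z0 = c w z) by eauto.
    destruct (epsilon_spec (inhabits w) _ Hex) as [P1 P2].
    eapply cinj; eauto. }
  rewrite E, IH; auto.
Qed.

Lemma img_app phi l1 : forall l2 w w',
  img phi w w' (l1 ++ l2) = img phi w w' l1 ++ img phi (last l1 w) (last (img phi w w' l1) w') l2.
Proof.
  induction l1 as [|z l IH]; intros l2 w w'; [reflexivity|].
  cbn [img app]. rewrite IH. rewrite (last_cons_eq l), (last_cons_eq (img phi z _ l)). reflexivity.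
Qed.

Lemma rpath_spec u : reduced_path adj v0 (rpath u) u.
Proof. unfold rpath. apply epsilon_spec. apply tree_ex. Qed.

Lemma rpath_eq u l : reduced_path adj v0 l u -> rpath u = l.
Proof. intros H. eapply tree_uniq; [apply rpath_spec|exact H]. Qed.

Section Phi.
Variables phi : X + Y -> X + Y.
Hypothesis sp : side_pres phi.
Hypothesis pinj : forall s t, phi s = phi t -> s = t.
Hypothesis g0 : good phi v0 v0.

Lemma G_good u : good phi u (G phi u) /\
  reduced_path adj v0 (img phi v0 v0 (rpath u)) (G phi u).
Proof.
  destruct (rpath_spec u) as (H1 & H2 & H3).
  destruct (img_walk phi sp pinj (rpath u) v0 v0 g0 H1 H2) as (B1 & B2 & B3).
  rewrite H3 in B3. unfold G. split; [exact B3|]. split; [exact B1|]. split; [exact B2|reflexivity].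
Qed.

Lemma G_v0 : G phi v0 = v0.
Proof.
  unfold G. rewrite (rpath_eq v0 []); [reflexivity|].
  split; [exact I|split; [exact I|reflexivity]].
Qed.

Lemma G_either u w : adj u w ->
  G phi w = pick (G phi u) (phi (c u w)) \/ G phi u = pick (G phi w) (phi (c w u)).
Proof.
  intros Huw.
  destruct (rpath_spec u) as (H1 & H2 & H3).
  destruct (nb_app w (rpath u) v0 H2) as [Hl|[l0 [E1 E2]]].
  - left. assert (R : rpath w = rpath u ++ [w]).
    { apply rpath_eq. split; [apply walk_app; [exact H1|rewrite H3; exact Huw]|].
      split; [exact Hl|apply last_last]. }
    unfold G at 1. rewrite R, img_app. cbn [img]. rewrite last_last. rewrite H3. reflexivity.
  - right. rewrite H3 in E1.
    assert (R : rpath w = l0).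
    { apply rpath_eq. rewrite E1 in H1, H2.
      split; [eapply walk_prefix; exact H1|]. split; [eapply nb_prefix; exact H2|exact E2]. }
    unfold G at 1. rewrite E1, img_app. cbn [img]. rewrite last_last. rewrite E2. unfold G. rewrite R. reflexivity.
Qed.

Lemma G_edge u w : adj u w -> adj (G phi u) (G phi w) /\ c (G phi u) (G phi w) = phi (c u w).
Proof.
  intros Huw. destruct (G_either u w Huw) as [E|E].
  - destruct (step_good phi u (G phi u) w sp (proj1 (G_good u)) Huw) as (A1 & A2 & _).
    rewrite E. auto.
  - destruct (step_good phi w (G phi w) u sp (proj1 (G_good w)) (adj_sym _ _ Huw)) as (A1 & A2 & _).
    rewrite <- E in A1. split; [apply adj_sym; exact A1|].
    apply (proj2 (proj1 (G_good w))); [exact Huw|apply adj_sym; exact A1].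
Qed.

Variable psi : X + Y -> X + Y.
Hypothesis hinv : forall s, psi (phi s) = s.

Lemma G_inv u : G psi (G phi u) = u.
Proof.
  destruct (G_good u) as [_ R]. apply rpath_eq in R.
  unfold G at 1. rewrite R. rewrite img_inv with (phi := phi); auto.
  - exact (proj2 (proj2 (rpath_spec u))).
  - exact (proj1 (rpath_spec u)).
Qed.
End Phi.

Lemma construct phi psi : side_pres phi -> side_pres psi ->
  (forall s, psi (phi s) = s) -> (forall s, phi (psi s) = s) ->
  (forall a, adj a v0 -> phi (c a v0) = c a v0) ->
  exists g, g v0 = v0 /\
   (exists h : V -> V, (forall v, h (g v) = v) /\ (forall v, g (h v) = v)) /\
   (forall u v, adj u v <-> adj (g u) (g v)) /\
   (forall v, inX (g v) <-> inX v) /\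
   (forall u w, adj u w -> c (g u) (g w) = phi (c u w)).
Proof.
  intros s1 s2 i1 i2 fx.
  assert (inj1 : forall s t, phi s = phi t -> s = t).
  { intros s t E. rewrite <- (i1 s), <- (i1 t), E. reflexivity. }
  assert (inj2 : forall s t, psi s = psi t -> s = t).
  { intros s t E. rewrite <- (i2 s), <- (i2 t), E. reflexivity. }
  assert (g1 : good phi v0 v0).
  { split; [tauto|]. intros a b Ha Hb. rewrite (cinto b a v0 Hb Ha), fx; auto. }
  assert (g2 : good psi v0 v0).
  { split; [tauto|]. intros a b Ha Hb. rewrite (cinto b a v0 Hb Ha).
    transitivity (psi (phi (c a v0))); [rewrite i1; reflexivity|rewrite (fx a Ha); reflexivity]. }
  exists (G phi). split; [apply G_v0|]. split.
  { exists (G psi). split; intros v; [apply G_inv; auto|apply (G_inv psi s2 inj2 g2 phi i2)]. }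
  split; [|split].
  - intros u v. split; [intros H; exact (proj1 (G_edge phi s1 inj1 g1 u v H))|].
    intros H. rewrite <- (G_inv phi s1 inj1 g1 psi i1 u), <- (G_inv phi s1 inj1 g1 psi i1 v).
    exact (proj1 (G_edge psi s2 inj2 g2 _ _ H)).
  - intros v. symmetry. exact (proj1 (proj1 (G_good phi s1 inj1 g1 v))).
  - intros u w H. exact (proj2 (G_edge phi s1 inj1 g1 u w H)).
Qed.
End Construct.

Section Suff.
Context {V X Y : Type} (adj : V -> V -> Prop) (inX : V -> Prop) (c : V -> V -> X + Y).
Hypothesis hT : bipartitioned_tree adj inX.
Hypothesis hc : legal_colouring adj inX c.
Variables (M : (X -> X) -> Prop) (N : (Y -> Y) -> Prop).
Hypothesis hM : perm_group M.
Hypothesis hMf : subdegree_finite M.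
Hypothesis hNf : all_orbits_finite N.
Variable a : V.

Definition Sg g := in_U adj inX c M N g /\ g a = a.
Definition Pairs p q := fun z : V * V => exists g, Sg g /\ z = (g p, g q).

Lemma single_fin q' (col : X + Y) :
  finite_set (fun z : V * V => exists w, z = (q', w) /\ adj q' w /\ c q' w = col).
Proof.
  apply finite_le1. intros z1 z2 (w1 & -> & A1 & C1) (w2 & -> & A2 & C2).
  f_equal. apply (cinj adj inX c hc q'); congruence.
Qed.

Lemma stepY q r : finite_set (fun z => exists g, Sg g /\ z = g q) -> ~ inX q -> adj q r ->
  finite_set (Pairs q r).
Proof.
  intros Hq Iq Hqr.
  destruct hc as (_ & cY & _).
  destruct (proj1 (cY q Iq) r Hqr) as [y1 Hy1].
  apply finite_sub with (Q := fun z => exists q', (exists g, Sg g /\ q' = g q) /\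
     (exists col, (exists n, N n /\ n y1 = col) /\
        (exists w, z = (q', w) /\ adj q' w /\ c q' w = inr col))).
  - intros z (g & [HU Ha] & ->). exists (g q). split; [exists g; split; [split; auto|reflexivity]|].
    destruct HU as (_ & Hadj & _ & _ & HN).
    destruct (HN q Iq) as (n & Nn & Hn).
    exists (n y1). split; [eauto|]. exists (g r). split; [reflexivity|]. split.
    + exact (proj1 (Hadj q r) Hqr).
    + apply Hn; auto.
  - apply (finite_bind _ (fun q' z => exists col, (exists n, N n /\ n y1 = col) /\
        (exists w, z = (q', w) /\ adj q' w /\ c q' w = inr col))); [exact Hq|].
    intros q' _.
    apply (finite_bind (fun col => exists n, N n /\ n y1 = col)
       (fun col z => exists w, z = (q', w) /\ adj q' w /\ c q' w = inr col)).
    + apply hNf.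
    + intros col _. apply single_fin.
Qed.

Lemma col_fin x0 x1 (cl : X + Y) :
  finite_set (fun x => exists m, M m /\ cl = inl (m x0) /\ m x1 = x).
Proof.
  destruct (classic (exists m0, M m0 /\ cl = inl (m0 x0))) as [[m0 [M0 E0]]|Hn].
  - destruct hM as (_ & hcomp & hinv).
    destruct (hinv m0 M0) as (m0' & M0' & K1 & K2).
    destruct (hMf x0 x1) as [lO HO].
    exists (map m0 lO). intros x (m & Mm & E & <-).
    rewrite E0 in E. injection E as E.
    rewrite <- (K2 (m x1)). apply in_map. apply HO.
    exists (fun z => m0' (m z)). split; [apply hcomp; auto|]. split; [|reflexivity].
    rewrite <- E. apply K1.
  - exists []. intros x (m & Mm & E & _). apply Hn. eauto.
Qed.

Lemma stepX p q r : finite_set (Pairs p q) -> inX q -> adj p q -> adj q r ->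
  finite_set (Pairs q r).
Proof.
  intros Hpq Iq Hp Hqr.
  destruct hc as (cX & _ & _).
  destruct (proj1 (cX q Iq) p (adj_sym adj inX hT _ _ Hp)) as [x0 Hx0].
  destruct (proj1 (cX q Iq) r Hqr) as [x1 Hx1].
  apply finite_sub with (Q := fun z => exists pq, Pairs p q pq /\
     (exists x, (exists m, M m /\ c (snd pq) (fst pq) = inl (m x0) /\ m x1 = x) /\
        (exists w, z = (snd pq, w) /\ adj (snd pq) w /\ c (snd pq) w = inl x))).
  - intros z (g & [HU Ha] & ->). exists (g p, g q).
    split; [exists g; split; [split; auto|reflexivity]|].
    destruct HU as (_ & Hadj & _ & HM & _).
    destruct (HM q Iq) as (m & Mm & Hm).
    exists (m x1). simpl. split.
    + exists m. split; [exact Mm|]. split; [|reflexivity].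
      apply Hm; [apply (adj_sym adj inX hT); exact Hp|exact Hx0].
    + exists (g r). split; [reflexivity|]. split.
      * exact (proj1 (Hadj q r) Hqr).
      * apply Hm; auto.
  - apply (finite_bind _ (fun pq z => exists x, (exists m, M m /\ c (snd pq) (fst pq) = inl (m x0) /\ m x1 = x) /\
        (exists w, z = (snd pq, w) /\ adj (snd pq) w /\ c (snd pq) w = inl x))); [exact Hpq|].
    intros pq _.
    apply (finite_bind (fun x => exists m, M m /\ c (snd pq) (fst pq) = inl (m x0) /\ m x1 = x)
       (fun x z => exists w, z = (snd pq, w) /\ adj (snd pq) w /\ c (snd pq) w = inl x)).
    + apply col_fin.
    + intros x _. apply single_fin.
Qed.

Lemma proj_fin p q : finite_set (Pairs p q) -> finite_set (fun z => exists g, Sg g /\ z = g q).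
Proof.
  intros [l Hl]. exists (map snd l). intros z (g & Sg0 & ->).
  change (g q) with (snd (g p, g q)). apply in_map. apply Hl. exists g. split; [exact Sg0|reflexivity].
Qed.

Lemma step p q r : adj p q -> adj q r -> finite_set (Pairs p q) -> finite_set (Pairs q r).
Proof.
  intros H1 H2 H3. destruct (classic (inX q)) as [I|I].
  - eapply stepX; eauto.
  - apply stepY; auto. eapply proj_fin; eauto.
Qed.

Lemma chain l : forall p u, adj p u -> finite_set (Pairs p u) -> is_walk adj u l ->
  finite_set (fun z => exists g, Sg g /\ z = g (last l u)).
Proof.
  induction l as [|z l IH]; intros p u H1 H2 H3.
  - simpl. eapply proj_fin; eauto.
  - destruct H3 as [A B]. rewrite last_cons_eq. apply (IH u z A); auto.
    eapply step; eauto.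
Qed.

Lemma suff_dir b : ~ inX a -> ~ inX b ->
  finite_set (fun z => exists g, in_U adj inX c M N g /\ g a = a /\ g b = z).
Proof.
  intros Ia Ib.
  destruct (tree_ex adj inX hT a b) as [l (W & _ & L)].
  destruct l as [|r l'].
  - simpl in L. subst b. exists [a]. intros z (g & _ & Ha & <-). left. auto.
  - destruct W as [Aar W'].
    assert (F : finite_set (Pairs a r)).
    { apply stepY; auto. exists [a]. intros z (g & [_ Ha] & ->). left. auto. }
    pose proof (chain l' a r Aar F W') as Fin.
    rewrite last_cons_eq in L. rewrite L in Fin.
    eapply finite_sub; [|exact Fin]. intros z (g & HU & Ha & <-). exists g. split; [split; auto|reflexivity].
Qed.
End Suff.

Lemma lift_sp {X Y} (m : X -> X) (n : Y -> Y) : side_pres (lift m n).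
Proof. split; intros; eexists; reflexivity. Qed.

Lemma lift_inv {X Y} (m m' : X -> X) (n n' : Y -> Y) :
  (forall x, m' (m x) = x) -> (forall y, n' (n y) = y) -> forall s, lift m' n' (lift m n s) = s.
Proof. intros H1 H2 [x|y]; simpl; congruence. Qed.

Lemma in_U_of {V X Y} (adj : V -> V -> Prop) inX (c : V -> V -> X + Y) M N g m n :
  M m -> N n -> (exists h : V -> V, (forall v, h (g v) = v) /\ (forall v, g (h v) = v)) ->
  (forall u v, adj u v <-> adj (g u) (g v)) -> (forall v, inX (g v) <-> inX v) ->
  (forall u w, adj u w -> c (g u) (g w) = lift m n (c u w)) -> in_U adj inX c M N g.
Proof.
  intros Mm Nn Hh Ha Hi He. split; [exact Hh|]. split; [exact Ha|]. split; [exact Hi|]. split.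
  - intros v _. exists m. split; [exact Mm|]. intros w x H E. rewrite He, E; auto.
  - intros v _. exists n. split; [exact Nn|]. intros w y H E. rewrite He, E; auto.
Qed.

Section Nec.
Context {V X Y : Type} (adj : V -> V -> Prop) (inX : V -> Prop) (c : V -> V -> X + Y).
Hypothesis hT : bipartitioned_tree adj inX.
Hypothesis hc : legal_colouring adj inX c.
Variables (M : (X -> X) -> Prop) (N : (Y -> Y) -> Prop).
Hypothesis hM : perm_group M.
Hypothesis hN : perm_group N.
Hypothesis hX : exists x1 x2 : X, x1 <> x2.
Hypothesis hY : exists y1 y2 : Y, y1 <> y2.
Hypothesis hbox : box_product_subdegree_finite adj inX c M N.

Lemma ex_Y : exists a, ~ inX a.
Proof.
  destruct hT as [[[v] _] _].
  destruct (classic (inX v)) as [I|I]; [|eauto].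
  destruct hX as [x _]. destruct hc as (cX & _).
  destruct (proj2 (cX v I) x) as [w [A _]]. exists w.
  pose proof (bip adj inX hT v w A). tauto.
Qed.

Lemma ex_X : exists a, inX a.
Proof.
  destruct hT as [[[v] _] _].
  destruct (classic (inX v)) as [I|I]; [eauto|].
  destruct hY as [y _]. destruct hc as (_ & cY & _).
  destruct (proj2 (cY v I) y) as [w [A _]]. exists w.
  pose proof (bip adj inX hT v w A). apply NNPP. tauto.
Qed.

Lemma nec_N : all_orbits_finite N.
Proof.
  intros y. destruct ex_Y as [a Ia].
  destruct hc as (cX & cY & _).
  destruct (proj2 (cY a Ia) y) as [w1 [A1 C1]].
  assert (I1 : inX w1) by (pose proof (bip adj inX hT a w1 A1); apply NNPP; tauto).
  destruct (proj1 (cX w1 I1) a (adj_sym adj inX hT _ _ A1)) as [xa Hxa].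
  assert (Hx' : exists x', x' <> xa).
  { destruct hX as (x1 & x2 & D). destruct (classic (x1 = xa)) as [E|E]; [exists x2; congruence|eauto]. }
  destruct Hx' as [x' Hx'].
  destruct (proj2 (cX w1 I1) x') as [b [Ab Cb]].
  assert (Dba : b <> a) by (intros ->; congruence).
  assert (Ib : ~ inX b) by (pose proof (bip adj inX hT w1 b Ab); tauto).
  pose proof (hbox a b Ia Ib) as Fin.
  apply finite_sub with (Q := fun col => exists z,
     ((exists g, in_U adj inX c M N g /\ g a = a /\ g b = z) /\ z <> a) /\
     (exists w', adj a w' /\ adj w' z /\ c a w' = inr col)).
  - intros col (n & Nn & <-).
    destruct hN as (_ & _ & hNi). destruct (hNi n Nn) as (n' & _ & K1 & K2).
    destruct (construct adj inX c hT hc a (lift (fun x => x) n) (lift (fun x => x) n')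
      (lift_sp _ _) (lift_sp _ _) (lift_inv _ _ _ _ (fun x => eq_refl) K1)
      (lift_inv _ _ _ _ (fun x => eq_refl) K2)) as (g & Ga & [h [H1 H2]] & Gadj & GX & Ge).
    { intros a0 A0. assert (I0 : inX a0) by (pose proof (bip adj inX hT a0 a A0); tauto).
      destruct (proj1 (cX a0 I0) a A0) as [x Hx]. rewrite Hx. reflexivity. }
    assert (HU : in_U adj inX c M N g).
    { apply (in_U_of adj inX c M N g (fun x => x) n); auto. exact (proj1 hM). eauto. }
    exists (g b). split; [split|].
    + exists g. auto.
    + intros E. apply Dba. rewrite <- (H1 b), <- (H1 a), E, Ga. reflexivity.
    + exists (g w1). split; [|split].
      * rewrite <- Ga at 1. exact (proj1 (Gadj _ _) A1).
      * exact (proj1 (Gadj _ _) Ab).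
      * rewrite <- Ga at 1. rewrite Ge by exact A1. rewrite C1. reflexivity.
  - apply (finite_bind (fun z => (exists g, in_U adj inX c M N g /\ g a = a /\ g b = z) /\ z <> a)
      (fun z col => exists w', adj a w' /\ adj w' z /\ c a w' = inr col)).
    + eapply finite_sub; [|exact Fin]. intros z [H _]. exact H.
    + intros z [_ Dz]. apply finite_le1. intros c1 c2 (w' & P1 & P2 & P3) (w'' & Q1 & Q2 & Q3).
      assert (E : [w'; z] = [w''; z]).
      { apply (tree_uniq adj inX hT a z).
        - split; [split; [exact P1|split; [exact P2|exact I]]|split; [split; [auto|exact I]|reflexivity]].
        - split; [split; [exact Q1|split; [exact Q2|exact I]]|split; [split; [auto|exact I]|reflexivity]]. }
      injection E as ->. congruence.
Qed.

Lemma nec_M : subdegree_finite M.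
Proof.
  intros x0 x1. destruct ex_X as [v Iv].
  destruct hc as (cX & cY & _).
  destruct (proj2 (cX v Iv) x0) as [a [Aa Ca]].
  destruct (proj2 (cX v Iv) x1) as [b [Ab Cb]].
  assert (Ia : ~ inX a) by (pose proof (bip adj inX hT v a Aa); tauto).
  assert (Ib : ~ inX b) by (pose proof (bip adj inX hT v b Ab); tauto).
  pose proof (hbox a b Ia Ib) as Fin.
  apply finite_sub with (Q := fun x => exists z,
     (exists g, in_U adj inX c M N g /\ g a = a /\ g b = z) /\ c v z = inl x).
  - intros x (m & Mm & Fx & <-).
    destruct hM as (_ & _ & hMi). destruct (hMi m Mm) as (m' & _ & K1 & K2).
    destruct (construct adj inX c hT hc v (lift m (fun y => y)) (lift m' (fun y => y))
      (lift_sp _ _) (lift_sp _ _) (lift_inv _ _ _ _ K1 (fun y => eq_refl))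
      (lift_inv _ _ _ _ K2 (fun y => eq_refl))) as (g & Gv & [h [H1 H2]] & Gadj & GX & Ge).
    { intros a0 A0. assert (I0 : ~ inX a0) by (pose proof (bip adj inX hT a0 v A0); tauto).
      destruct (proj1 (cY a0 I0) v A0) as [y Hy]. rewrite Hy. reflexivity. }
    assert (HU : in_U adj inX c M N g).
    { apply (in_U_of adj inX c M N g m (fun y => y)); auto. exact (proj1 hN). eauto. }
    assert (Ga : g a = a).
    { apply (cinj adj inX c hc v).
      - rewrite <- Gv at 1. exact (proj1 (Gadj _ _) Aa).
      - exact Aa.
      - rewrite <- Gv at 1. rewrite Ge by exact Aa. rewrite Ca. simpl. rewrite Fx. reflexivity. }
    exists (g b). split.
    + exists g. auto.
    + rewrite <- Gv at 1. rewrite Ge by exact Ab. rewrite Cb. reflexivity.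
  - apply (finite_bind (fun z => exists g, in_U adj inX c M N g /\ g a = a /\ g b = z)
      (fun z x => c v z = inl x)); [exact Fin|].
    intros z _. apply finite_le1. intros p q E1 E2. rewrite E1 in E2. congruence.
Qed.
End Nec.

Theorem proposition5p2
  (X Y : Type) (M : (X -> X) -> Prop) (N : (Y -> Y) -> Prop)
  (hX : exists x1 x2 : X, x1 <> x2) (hY : exists y1 y2 : Y, y1 <> y2)
  (hM : perm_group M) (hN : perm_group N)
  (hMnt : nontrivial_group M) (hNnt : nontrivial_group N)
  (V : Type) (adj : V -> V -> Prop) (inX : V -> Prop) (c : V -> V -> X + Y)
  (hT : bipartitioned_tree adj inX) (hc : legal_colouring adj inX c) :
  box_product_subdegree_finite adj inX c M N <->
  (subdegree_finite M /\ all_orbits_finite N).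
Proof.
  split.
  - intros Hb. split.
    + exact (nec_M adj inX c hT hc M N hM hN hY Hb).
    + exact (nec_N adj inX c hT hc M N hM hN hX Hb).
  - intros [HMf HNf] a b Ia Ib.
    exact (suff_dir adj inX c hT hc M N hM HMf HNf a b Ia Ib).
Qed.
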